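(* Let $G$ be a finite group of order $mn$ with identity $e$, let $H$ be a subgroup of $G$ of order $n$, and let $D=H\setminus\{e\}$. (i) If $S'$ is an $(mn,s,k,\lambda,\mu)$-DPDF (respectively, EPDF) in $G$ partitioning $D$, then $\mu=0$ and $S'$ is a near-complete $(n,s,k,\lambda)$-DDF (respectively, near-complete $(n,s,k,\lambda)$-EDF) in the group $H$. (ii) Every near-complete $(n,s,k,\lambda)$-DDF (respectively, EDF) in $H$, regarded as a family of subsets of $G$, is an $(mn,s,k,\lambda,0)$-DPDF (respectively, EPDF) in $G$ partitioning $D$.
   Context: Groups are written multiplicatively; $G^*=G\setminus\{e\}$. For $X\subseteq G$, $\Delta(X)$ is the multiset $\{xy^{-1}: x,y\in X, x\ne y\}$; for $X_1,X_2\subseteq G$, $\Delta(X_1,X_2)$ is the multiset $\{xy^{-1}:x\in X_1,y\in X_2\}$. For a family $A=\{A_1,\dots,A_s\}$ of pairwise disjoint subsets, ${\rm Int}(A)=\bigcup_i\Delta(A_i)$ and ${\rm Ext}(A)=\bigcup_{i\ne j}\Delta(A_i,A_j)$ (multiset unions). For $|G|=v$, a $(v,s,k,\lambda,\mu)$-DPDF is a family of $s$ pairwise disjoint $k$-subsets of $G^*$ with union $S$ such that ${\rm Int}(A)$ contains each element of $S$ exactly $\lambda$ times and each element of $G\setminus(S\cup\{e\})$ exactly $\mu$ times; a $(v,s,k,\lambda,\mu)$-EPDF is defined the same way using ${\rm Ext}(A)$. In a group $H$ of order $n$, an $(n,s,k,\lambda)$-disjoint difference family (DDF) is a family of $s$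 pairwise disjoint $k$-subsets of $H$ such that ${\rm Int}(A)$ contains each non-identity element of $H$ exactly $\lambda$ times; an $(n,s,k,\lambda)$-external difference family (EDF) is a family of $s$ pairwise disjoint $k$-subsets of $H\setminus\{e\}$ such that ${\rm Ext}(A)$ contains each non-identity element of $H$ exactly $\lambda$ times. Such a family is near-complete if it partitions $H\setminus\{e\}$ (i.e. its sets are pairwise disjoint with union $H\setminus\{e\}$). *)

(* Defs.v *)
From mathcomp Require Import all_boot all_fingroup.
Set Implicit Arguments. Unset Strict Implicit. Unset Printing Implicit Defensive.



Section Defs.
Variable gT : finGroupType.

Definition int_mult (s : nat) (A : 'I_s -> {set gT}) (g : gT) : nat :=
  \sum_(i < s) #|[set xy in setX (A i) (A i) |
                   (xy.1 != xy.2) && ((xy.1 * xy.2^-1)%g == g)]|.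

Definition ext_mult (s : nat) (A : 'I_s -> {set gT}) (g : gT) : nat :=
  \sum_(i < s) \sum_(j < s | i != j)
     #|[set xy in setX (A i) (A j) | (xy.1 * xy.2^-1)%g == g]|.

Definition pairwise_disjoint (s : nat) (A : 'I_s -> {set gT}) : Prop :=
  forall i j : 'I_s, i != j -> [disjoint A i & A j].

Definition fam_union (s : nat) (A : 'I_s -> {set gT}) : {set gT} :=
  \bigcup_(i < s) A i.

Definition pdf_base (G : {group gT}) (v s k : nat) (A : 'I_s -> {set gT}) :=
  [/\ #|G| = v, pairwise_disjoint A &
      forall i, A i \subset G^#%g /\ #|A i| = k].

Definition is_DPDF (G : {group gT}) (v s k lam mu : nat) (A : 'I_s -> {set gT}) :=
  pdf_base G v k A /\
  (forall g, g \in G^#%g ->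
     (g \in fam_union A -> int_mult A g = lam) /\
     (g \notin fam_union A -> int_mult A g = mu)).

Definition is_EPDF (G : {group gT}) (v s k lam mu : nat) (A : 'I_s -> {set gT}) :=
  pdf_base G v k A /\
  (forall g, g \in G^#%g ->
     (g \in fam_union A -> ext_mult A g = lam) /\
     (g \notin fam_union A -> ext_mult A g = mu)).

Definition is_DDF (H : {group gT}) (n s k lam : nat) (A : 'I_s -> {set gT}) :=
  [/\ #|H| = n, pairwise_disjoint A,
      (forall i, A i \subset H /\ #|A i| = k) &
      forall g, g \in H^#%g -> int_mult A g = lam].

Definition is_EDF (H : {group gT}) (n s k lam : nat) (A : 'I_s -> {set gT}) :=
  [/\ #|H| = n, pairwise_disjoint A,
      (forall i, A i \subset H^#%g /\ #|A i| = k) &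
      forall g, g \in H^#%g -> ext_mult A g = lam].

Definition near_complete (H : {group gT}) (s : nat) (A : 'I_s -> {set gT}) :=
  pairwise_disjoint A /\ fam_union A = H^#%g.

End Defs.

(* Main.v *)
Require Import Defs.
From mathcomp Require Import all_boot all_fingroup.
Set Implicit Arguments. Unset Strict Implicit. Unset Printing Implicit Defensive.

Section Aux.
Variable gT : finGroupType.

Lemma int0 (H : {group gT}) s (A : 'I_s -> {set gT}) g :
  (forall i, A i \subset H) -> g \notin H -> int_mult A g = 0.
Proof.
move=> sA gH; rewrite /int_mult big1 // => i _.
apply/eqP; rewrite cards_eq0; apply/eqP/setP => [[x y]]; rewrite !inE /=.
apply/negP => /andP[/andP[hx hy] /andP[_ /eqP e]].
by move/negP: gH; apply; rewrite -e groupM ?groupV // (subsetP (sA i)).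
Qed.

Lemma ext0 (H : {group gT}) s (A : 'I_s -> {set gT}) g :
  (forall i, A i \subset H) -> g \notin H -> ext_mult A g = 0.
Proof.
move=> sA gH; rewrite /ext_mult big1 // => i _; rewrite big1 // => j _.
apply/eqP; rewrite cards_eq0; apply/eqP/setP => [[x y]]; rewrite !inE /=.
apply/negP => /andP[/andP[hx hy] /eqP e].
by move/negP: gH; apply; rewrite -e groupM ?groupV // ?(subsetP (sA i) _ hx) ?(subsetP (sA j) _ hy).
Qed.

Lemma sub_union s (A : 'I_s -> {set gT}) i : A i \subset fam_union A.
Proof. by rewrite /fam_union; apply: (bigcup_sup i). Qed.

Lemma notin_H (G H : {group gT}) m n :
  #|G| = (m * n)%N -> H \subset G -> #|H| = n -> 1 < m ->
  exists g, (g \in G^#%g) && (g \notin H^#%g).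
Proof.
move=> cG sHG cH m1.
have : H \proper G.
  rewrite properEcard sHG cG cH.
  have n0 : 0 < n by rewrite -cH cardG_gt0.
  by rewrite -{1}(mul1n n) ltn_pmul2r.
case/properP => _ [g gG gH]; exists g; move/negPf: (gH) => gH'.
rewrite !inE gG gH' andbF /=.
have -> : (g != 1%g) by apply/eqP => g1; move: gH; rewrite g1 group1.
by [].
Qed.

Lemma notinH (H : {group gT}) g : g \in [set: gT] -> g != 1%g -> g \notin H^#%g -> g \notin H.
Proof. by move=> _ g1; rewrite !inE g1. Qed.

End Aux.

Theorem mainTheorem12 (gT : finGroupType) (G H : {group gT}) (m n : nat) :
  #|G| = (m * n)%N -> H \subset G -> #|H| = n ->
  (* (i), DPDF case *)
  (forall (s k lam mu : nat) (A : 'I_s -> {set gT}),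
     is_DPDF G (m * n) k lam mu A -> fam_union A = H^#%g ->
     (1 < m -> mu = 0) /\ (is_DDF H n k lam A /\ near_complete H A)) /\
  (* (i), EPDF case *)
  (forall (s k lam mu : nat) (A : 'I_s -> {set gT}),
     is_EPDF G (m * n) k lam mu A -> fam_union A = H^#%g ->
     (1 < m -> mu = 0) /\ (is_EDF H n k lam A /\ near_complete H A)) /\
  (* (ii), DDF case *)
  (forall (s k lam : nat) (A : 'I_s -> {set gT}),
     is_DDF H n k lam A -> near_complete H A ->
     is_DPDF G (m * n) k lam 0 A /\ fam_union A = H^#%g) /\
  (* (ii), EDF case *)
  (forall (s k lam : nat) (A : 'I_s -> {set gT}),
     is_EDF H n k lam A -> near_complete H A ->
     is_EPDF G (m * n) k lam 0 A /\ fam_union A = H^#%g).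
Proof.
move=> cG sHG cH.
have sAH : forall s (A : 'I_s -> {set gT}), fam_union A = H^#%g ->
    forall i, A i \subset H.
  move=> s A U i; apply: (subset_trans (sub_union A i)).
  by rewrite U; apply: subD1set.
have sHG' : H^#%g \subset G^#%g by apply: setSD.
have ninH : forall g, g \in G^#%g -> g \notin H^#%g -> g \notin H.
  by move=> g; rewrite !inE => /andP[g1 _]; rewrite g1.
split; [|split; [|split]].
- move=> s k lam mu A [[_ dA kA] P] U; split.
    move=> m1; have [g /andP[gG gH]] := notin_H cG sHG cH m1.
    have [_ <-] := P g gG; last by rewrite U.
    by apply: int0 (sAH _ _ U) _; apply: ninH.
  split; last by [].
  split => //.
  - by move=> i; split; [apply: sAH U i | case: (kA i)].
  - by move=> g gH; have [P1 _] := P g (subsetP sHG' g gH); apply: P1; rewrite U.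
- move=> s k lam mu A [[_ dA kA] P] U; split.
    move=> m1; have [g /andP[gG gH]] := notin_H cG sHG cH m1.
    have [_ <-] := P g gG; last by rewrite U.
    by apply: ext0 (sAH _ _ U) _; apply: ninH.
  split; last by [].
  split => //.
  - by move=> i; split; [rewrite -U; apply: sub_union | case: (kA i)].
  - by move=> g gH; have [P1 _] := P g (subsetP sHG' g gH); apply: P1; rewrite U.
- move=> s k lam A [_ dA kA P] [_ U]; split => //; split.
    split => // i; split; last by case: (kA i).
    by apply: subset_trans sHG'; rewrite -U; apply: sub_union.
  move=> g gG; split; first by rewrite U => /P.
  by rewrite U => gH; apply: int0 (sAH _ _ U) _; apply: ninH.
- move=> s k lam A [_ dA kA P] [_ U]; split => //; split.
    split => // i; split; last by case: (kA i).
    by apply: subset_trans sHG'; rewrite -U; apply: sub_union.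
  move=> g gG; split; first by rewrite U => /P.
  by rewrite U => gH; apply: ext0 (sAH _ _ U) _; apply: ninH.
Qed.
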